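(* Let $\mathcal{S}$ be a constrained system with a single-state graph presentation as in the context, with edge set $\mathcal{E}$, label length $s$ and pair counts $\alpha_t$. Then $$\mathcal{GV}(\mathcal{S})\triangleq\{(\delta,R_{\rm GV}(\delta)):\delta\in[0,1]\}=\{(\delta(y),\rho(y)):y\in[0,1]\}\cup\{(\delta,0):\delta\ge\delta_{\max}\},$$ where $$\delta_{\max}=\frac{\sum_{t\ge0}t\alpha_t}{s|\mathcal{E}|^2},\qquad \delta(y)=\frac{\sum_{t\ge0}t\alpha_ty^t}{s\sum_{t\ge0}\alpha_ty^t},\qquad \rho(y)=\frac1s\left(\log\frac{|\mathcal{E}|^2}{\sum_{t\ge0}\alpha_ty^t}+\frac{\sum_{t\ge0}t\alpha_ty^t}{\sum_{t\ge0}\alpha_ty^t}\log y\right).$$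
   Context: $\mathcal{G}$ is a labelled graph with exactly one state, a finite set $\mathcal{E}$ of loops (parallel edges) at that state, and an injective labelling $\mathcal{L}:\mathcal{E}\to\{0,1\}^s$ for some $s\ge1$. $\mathcal{S}$ is the set of words obtained by concatenating labels along paths; for $n$ a multiple of $s$, $\mathcal{S}_n$ is the set of such words of length $n$ (labels of paths with $n/s$ edges). $\log$ is to a fixed base (base 2); limits below are over $n$ multiple of $s$. $\mathrm{Cap}(\mathcal{S})=\limsup\frac1n\log|\mathcal{S}_n|$. For $\mathbf{x}\in\mathcal{S}_n$, $V(\mathbf{x},r)=|\{\mathbf{y}\in\mathcal{S}_n:d_H(\mathbf{x},\mathbf{y})\le r\}|$ ($d_H$ = Hamming distance), $T(n,d)=\sum_{\mathbf{x}\in\mathcal{S}_n}V(\mathbf{x},d-1)$, $\widetilde T(\delta)=\limsup\frac1n\log T(n,\lfloor\delta n\rfloor)$, and $R_{\rm GV}(\delta)=2\,\mathrm{Cap}(\mathcal{S})-\widetilde T(\delta)$. For $0\le t\le s$, $\alpha_t=\#\{(e,f)\in\mathcal{E}^2:d_H(\mathcal{L}(e),\mathcal{L}(f))=t\}$. At $y=0$ the term involving $\log 0$ is interpreted as $0$. *)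

(* Defs.v *)
From Stdlib Require Import Reals List Arith ZArith Bool.
From Coquelicot Require Import Coquelicot.
Import ListNotations.
Open Scope R_scope.

(* Single-state graph: edges are 0,...,m-1 (any finite edge set E is in
   bijection with such an initial segment), labelled by L e : list bool
   (a word of length s). *)

(** logarithm to base 2 (Stdlib: ln x = 0 for x <= 0). *)
Definition log2 (x : R) : R := ln x / ln 2.

Fixpoint hamming (x y : list bool) : nat :=
  match x, y with
  | a :: x', b :: y' => ((if Bool.eqb a b then 0 else 1) + hamming x' y')%nat
  | _, _ => 0%nat
  end.

Fixpoint paths (m k : nat) : list (list nat) :=
  match k with
  | O => [nil]
  | S k' => flat_map (fun e => map (cons e) (paths m k')) (seq 0 m)
  end.

(** S_n for n = k*s : the set (duplicate-free list) of labels of paths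
    with k edges. *)
Definition words (m : nat) (L : nat -> list bool) (k : nat) : list (list bool) :=
  nodup (list_eq_dec Bool.bool_dec)
        (map (fun p => concat (map L p)) (paths m k)).

Definition ball_size (m : nat) (L : nat -> list bool) (k : nat)
    (x : list bool) (r : nat) : nat :=
  length (filter (fun y => Nat.leb (hamming x y) r) (words m L k)).

(** T(n, d) = sum_{x in S_n} V(x, d-1), n = k*s.  NB: d - 1 is truncated
    natural subtraction. *)
Definition Tcount (m : nat) (L : nat -> list bool) (k d : nat) : nat :=
  fold_right Nat.add 0%nat
    (map (fun x => ball_size m L k x (d - 1)) (words m L k)).

(** Cap(S) = limsup_n (1/n) log |S_n|, n = k*s ranging over multiples of s *)
Definition Cap (m s : nat) (L : nat -> list bool) : Rbar :=
  LimSup_seq (fun k => / INR (k * s) * log2 (INR (length (words m L k)))).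

Definition nfloor (x : R) : nat := Z.to_nat (Int_part x).

Definition Ttilde (m s : nat) (L : nat -> list bool) (delta : R) : Rbar :=
  LimSup_seq (fun k =>
    / INR (k * s) * log2 (INR (Tcount m L k (nfloor (delta * INR (k * s)))))).

Definition R_GV (m s : nat) (L : nat -> list bool) (delta : R) : Rbar :=
  Rbar_minus (Rbar_mult 2 (Cap m s L)) (Ttilde m s L delta).

Definition alpha (m : nat) (L : nat -> list bool) (t : nat) : nat :=
  length (filter (fun p => Nat.eqb (hamming (L (fst p)) (L (snd p))) t)
                 (list_prod (seq 0 m) (seq 0 m))).

(** sum_{t >= 0} alpha_t y^t  (alpha_t = 0 for t > s) *)
Definition Apoly (m s : nat) (L : nat -> list bool) (y : R) : R :=
  fold_right Rplus 0 (map (fun t => INR (alpha m L t) * y ^ t) (seq 0 (S s))).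

Definition Bpoly (m s : nat) (L : nat -> list bool) (y : R) : R :=
  fold_right Rplus 0
    (map (fun t => INR t * INR (alpha m L t) * y ^ t) (seq 0 (S s))).

Definition delta_max (m s : nat) (L : nat -> list bool) : R :=
  fold_right Rplus 0 (map (fun t => INR t * INR (alpha m L t)) (seq 0 (S s)))
  / (INR s * INR (m * m)).

Definition delta_y (m s : nat) (L : nat -> list bool) (y : R) : R :=
  Bpoly m s L y / (INR s * Apoly m s L y).

(** rho(y); at y = 0, log2 0 = 0 in Stdlib, matching the convention that
    the term involving log 0 is 0. *)
Definition rho_y (m s : nat) (L : nat -> list bool) (y : R) : R :=
  / INR s * (log2 (INR (m * m) / Apoly m s L y)
             + Bpoly m s L y / Apoly m s L y * log2 y).

(* Main.v *)
Require Import Defs.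
From Stdlib Require Import Reals List Arith Lia Lra ZArith Ranalysis5.
From Coquelicot Require Import Coquelicot.
Import ListNotations.
Open Scope R_scope.

Definition lsum {X : Type} (f : X -> R) (l : list X) : R :=
  fold_right Rplus 0 (map f l).

Lemma lsum_nil {X} (f : X -> R) : lsum f [] = 0.
Proof. reflexivity. Qed.
Lemma lsum_cons {X} (f : X -> R) a l : lsum f (a :: l) = f a + lsum f l.
Proof. reflexivity. Qed.
Lemma lsum_app {X} (f : X -> R) l1 l2 : lsum f (l1 ++ l2) = lsum f l1 + lsum f l2.
Proof. induction l1; simpl; unfold lsum in *; simpl; [lra|rewrite IHl1; lra]. Qed.
Lemma lsum_map {X Y} (f : Y -> R) (g : X -> Y) l : lsum f (map g l) = lsum (fun x => f (g x)) l.
Proof. unfold lsum; rewrite map_map; reflexivity. Qed.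
Lemma lsum_flat_map {X Y} (f : Y -> R) (g : X -> list Y) l :
  lsum f (flat_map g l) = lsum (fun x => lsum f (g x)) l.
Proof. induction l; simpl; [reflexivity|]. rewrite lsum_app, IHl. reflexivity. Qed.
Lemma lsum_plus {X} (f g : X -> R) l : lsum (fun x => f x + g x) l = lsum f l + lsum g l.
Proof. induction l; unfold lsum in *; simpl; [lra|rewrite IHl; lra]. Qed.
Lemma lsum_scal {X} (c : R) (f : X -> R) l : lsum (fun x => c * f x) l = c * lsum f l.
Proof. induction l; unfold lsum in *; simpl; [lra|rewrite IHl; lra]. Qed.
Lemma lsum_ext_in {X} (f g : X -> R) l : (forall x, In x l -> f x = g x) -> lsum f l = lsum g l.
Proof. induction l; intros H; unfold lsum in *; simpl; [lra|].
  rewrite H by (left; auto). rewrite IHl; [lra|intros; apply H; right; auto]. Qed.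
Lemma lsum_le_in {X} (f g : X -> R) l : (forall x, In x l -> f x <= g x) -> lsum f l <= lsum g l.
Proof. induction l; intros H; unfold lsum in *; simpl; [lra|].
  specialize (H a (or_introl eq_refl)) as H1. assert (fold_right Rplus 0 (map f l) <= fold_right Rplus 0 (map g l)) by (apply IHl; intros; apply H; right; auto). lra. Qed.
Lemma lsum_lt_in {X} (f g : X -> R) l : (forall x, In x l -> f x <= g x) ->
  (exists x, In x l /\ f x < g x) -> lsum f l < lsum g l.
Proof. induction l; intros H [x [Hx Hlt]]; [destruct Hx|].
  rewrite !lsum_cons. destruct Hx as [<-|Hx].
  - assert (lsum f l <= lsum g l) by (apply lsum_le_in; intros; apply H; right; auto). lra.
  - assert (f a <= g a) by (apply H; left; auto).
    assert (lsum f l < lsum g l) by (apply IHl; [intros; apply H; right; auto| exists x; auto]). lra. Qed.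
Lemma lsum_zero {X} l : lsum (fun _ : X => 0) l = 0.
Proof. induction l; unfold lsum in *; simpl; lra. Qed.
Lemma lsum_swap {X Y} (f : X -> Y -> R) l1 l2 :
  lsum (fun x => lsum (fun y => f x y) l2) l1 = lsum (fun y => lsum (fun x => f x y) l1) l2.
Proof. induction l1; simpl.
  - rewrite lsum_nil. symmetry. apply (lsum_zero l2).
  - rewrite lsum_cons, IHl1. rewrite <- lsum_plus. apply lsum_ext_in. intros; rewrite lsum_cons; lra. Qed.
Lemma lsum_nonneg {X} (f : X -> R) l : (forall x, In x l -> 0 <= f x) -> 0 <= lsum f l.
Proof. intros H. rewrite <- (lsum_zero l). apply lsum_le_in; auto. Qed.
Lemma lsum_const1 {X} (l : list X) : lsum (fun _ => 1) l = INR (length l).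
Proof. induction l; [reflexivity|]. rewrite lsum_cons, IHl. simpl length. rewrite S_INR. lra. Qed.
Lemma INR_length_filter {X} (g : X -> bool) l :
  INR (length (filter g l)) = lsum (fun x => if g x then 1 else 0) l.
Proof. induction l; [reflexivity|]. simpl filter. rewrite lsum_cons. destruct (g a); simpl length;
  [rewrite S_INR|]; lra. Qed.
Lemma INR_fold_add {X} (f : X -> nat) l :
  INR (fold_right Nat.add 0%nat (map f l)) = lsum (fun x => INR (f x)) l.
Proof. induction l; [reflexivity|]. simpl. rewrite plus_INR, IHl. reflexivity. Qed.
Lemma lsum_seq_delta (F : nat -> R) len : forall start x, (start <= x < start + len)%nat ->
  lsum (fun t => if Nat.eqb x t then F t else 0) (seq start len) = F x.
Proof. induction len; intros start x Hx; [lia|]. simpl seq. rewrite lsum_cons.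
  destruct (Nat.eqb_spec x start).
  - subst. rewrite (lsum_ext_in _ (fun _ => 0)). rewrite lsum_zero; lra.
    intros t Ht. apply in_seq in Ht. destruct (Nat.eqb_spec start t); [lia|reflexivity].
  - rewrite IHlen by lia. lra. Qed.
Definition lab (L : nat -> list bool) (p : list nat) := concat (map L p).

Lemma hamming_app x1 x2 y1 y2 : length x1 = length y1 ->
  hamming (x1 ++ x2) (y1 ++ y2) = (hamming x1 y1 + hamming x2 y2)%nat.
Proof. revert y1; induction x1; intros [|b y1] H; simpl in *; try lia.
  rewrite IHx1 by lia. lia. Qed.
Lemma hamming_le x y : (hamming x y <= length x)%nat.
Proof. revert y; induction x; intros [|b y]; simpl; try lia.
  specialize (IHx y). destruct (Bool.eqb a b); lia. Qed.
Lemma hamming_refl x : hamming x x = 0%nat.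
Proof. induction x; simpl; auto. rewrite Bool.eqb_reflx. auto. Qed.
Lemma hamming_zero x y : length x = length y -> hamming x y = 0%nat -> x = y.
Proof. revert y; induction x; intros [|b y] H1 H2; simpl in *; try lia; auto.
  destruct (Bool.eqb a b) eqn:E; simpl in H2; [|lia].
  apply Bool.eqb_prop in E. subst. f_equal. apply IHx; lia. Qed.

Lemma paths_in m k p : In p (paths m k) -> length p = k /\ (forall e, In e p -> (e < m)%nat).
Proof. revert p; induction k; intros p H; simpl in H.
  - destruct H as [<-|[]]. split; [reflexivity| intros e []].
  - apply in_flat_map in H. destruct H as [e [He Hp]]. apply in_map_iff in Hp.
    destruct Hp as [q [<- Hq]]. apply IHk in Hq. destruct Hq as [H1 H2].
    apply in_seq in He. split; [simpl; lia|]. intros e' [<-|H']; [lia|auto]. Qed.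

Lemma lab_len m s L k p : (forall e, (e < m)%nat -> length (L e) = s) ->
  In p (paths m k) -> length (lab L p) = (k * s)%nat.
Proof. intros hlen Hp. apply paths_in in Hp. destruct Hp as [H1 H2]. subst k.
  induction p; simpl; auto. unfold lab in *; simpl. rewrite length_app, hlen by (apply H2; left; auto).
  rewrite IHp; auto. intros; apply H2; right; auto. Qed.

Lemma app_same_len {A} (a b c d : list A) : length a = length c -> a ++ b = c ++ d -> a = c /\ b = d.
Proof. revert c; induction a; intros [|x c] H1 H2; simpl in *; try lia; auto.
  inversion H2; subst. destruct (IHa c) as [-> ->]; auto. Qed.

Lemma lab_inj m s L k p q : (forall e, (e < m)%nat -> length (L e) = s) ->
  (forall e f, (e < m)%nat -> (f < m)%nat -> L e = L f -> e = f) ->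
  In p (paths m k) -> In q (paths m k) -> lab L p = lab L q -> p = q.
Proof. intros hlen hinj Hp Hq. apply paths_in in Hp, Hq. destruct Hp as [Hp1 Hp2], Hq as [Hq1 Hq2].
  revert q Hq1 Hq2; subst k; induction p; intros [|f q] Hq1 Hq2 E; simpl in *; try lia; auto.
  unfold lab in E; simpl in E. apply app_same_len in E; [|rewrite !hlen; auto].
  destruct E as [E1 E2]. f_equal. apply hinj; auto. apply IHp; auto. Qed.

Lemma NoDup_flat_map' {A B} (f : A -> list B) l : NoDup l -> (forall x, NoDup (f x)) ->
  (forall x y z, x <> y -> In z (f x) -> In z (f y) -> False) -> NoDup (flat_map f l).
Proof. induction l; intros H1 H2 H3; simpl; [constructor|].
  inversion H1; subst. apply NoDup_app; auto.
  intros z Hz Hz'. apply in_flat_map in Hz'. destruct Hz' as [y [Hy Hzy]].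
  apply (H3 a y z); auto. intros ->; auto. Qed.

Lemma paths_NoDup m k : NoDup (paths m k).
Proof. induction k; simpl. constructor; [intros []|constructor].
  apply NoDup_flat_map'. apply seq_NoDup. intros x. apply NoDup_map_NoDup_ForallPairs; auto.
  intros a b _ _ E; inversion E; auto.
  intros x y z Hxy Hx Hy. apply in_map_iff in Hx, Hy. destruct Hx as [p [<- _]], Hy as [q [E _]].
  inversion E; auto. Qed.

Lemma paths_length m k : INR (length (paths m k)) = INR m ^ k.
Proof. induction k; simpl; [lra|]. rewrite <- lsum_const1, lsum_flat_map.
  rewrite (lsum_ext_in _ (fun _ => INR m ^ k * 1)). rewrite lsum_scal, lsum_const1, length_seq. lra.
  intros. rewrite lsum_map, lsum_const1, <- IHk. lra. Qed.

Lemma words_eq m s L k : (forall e, (e < m)%nat -> length (L e) = s) ->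
  (forall e f, (e < m)%nat -> (f < m)%nat -> L e = L f -> e = f) ->
  words m L k = map (lab L) (paths m k).
Proof. intros hlen hinj. unfold words. apply nodup_fixed_point.
  apply NoDup_map_NoDup_ForallPairs; [|apply paths_NoDup].
  intros p q Hp Hq. apply (lab_inj m s L k); auto. Qed.
Definition hd (L : nat -> list bool) e f := hamming (L e) (L f).
Definition psum m L (G : nat -> R) :=
  lsum (fun e => lsum (fun f => G (hd L e f)) (seq 0 m)) (seq 0 m).
Definition SP m L k (F : nat -> R) :=
  lsum (fun p => lsum (fun q => F (hamming (lab L p) (lab L q))) (paths m k)) (paths m k).

Lemma SP_0 m L F : SP m L 0 F = F 0%nat.
Proof. unfold SP. simpl. unfold lsum; simpl. lra. Qed.

Lemma SP_S m s L k F : (forall e, (e < m)%nat -> length (L e) = s) ->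
  SP m L (S k) F = psum m L (fun t => SP m L k (fun d => F (t + d)%nat)).
Proof. intros hlen. unfold SP, psum. cbn [paths]. rewrite lsum_flat_map.
  apply lsum_ext_in; intros e He. rewrite lsum_map.
  rewrite (lsum_ext_in _ (fun p => lsum (fun f => lsum (fun q => F (hd L e f + hamming (lab L p) (lab L q))%nat) (paths m k)) (seq 0 m))).
  apply lsum_swap.
  intros p Hp. rewrite lsum_flat_map. apply lsum_ext_in; intros f Hf. rewrite lsum_map.
  apply lsum_ext_in; intros q Hq. unfold lab; simpl. rewrite hamming_app. reflexivity.
  apply in_seq in He, Hf. rewrite !hlen by lia. reflexivity. Qed.

Lemma SP_ext m L k F G : (forall d, F d = G d) -> SP m L k F = SP m L k G.
Proof. intros H. unfold SP. apply lsum_ext_in; intros; apply lsum_ext_in; intros; apply H. Qed.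
Lemma SP_plus m L k F G : SP m L k (fun d => F d + G d) = SP m L k F + SP m L k G.
Proof. unfold SP. rewrite <- lsum_plus. apply lsum_ext_in; intros; apply lsum_plus. Qed.
Lemma SP_scal m L k c F : SP m L k (fun d => c * F d) = c * SP m L k F.
Proof. unfold SP. rewrite <- lsum_scal. apply lsum_ext_in; intros; apply lsum_scal. Qed.
Lemma SP_le m L k F G : (forall d, F d <= G d) -> SP m L k F <= SP m L k G.
Proof. intros H. unfold SP. apply lsum_le_in; intros; apply lsum_le_in; intros; apply H. Qed.
Lemma psum_ext m L F G : (forall d, F d = G d) -> psum m L F = psum m L G.
Proof. intros H. unfold psum. apply lsum_ext_in; intros; apply lsum_ext_in; intros; apply H. Qed.
Lemma psum_plus m L F G : psum m L (fun d => F d + G d) = psum m L F + psum m L G.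
Proof. unfold psum. rewrite <- lsum_plus. apply lsum_ext_in; intros; apply lsum_plus. Qed.
Lemma psum_scal m L c F : psum m L (fun d => c * F d) = c * psum m L F.
Proof. unfold psum. rewrite <- lsum_scal. apply lsum_ext_in; intros; apply lsum_scal. Qed.
Lemma psum_scal_r m L c F : psum m L (fun d => F d * c) = psum m L F * c.
Proof. rewrite Rmult_comm, <- psum_scal. apply psum_ext; intros; lra. Qed.

Definition Ay m L y := psum m L (fun t => y ^ t).
Definition By m L y := psum m L (fun t => INR t * y ^ t).
Definition Cy m L y := psum m L (fun t => INR t ^ 2 * y ^ t).

Lemma SP_shift0 m L k y t : SP m L k (fun d => y ^ (t + d)) = y ^ t * SP m L k (fun d => y ^ d).
Proof. rewrite <- SP_scal. apply SP_ext; intros; apply pow_add. Qed.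

Lemma M0 m s L y k : (forall e, (e < m)%nat -> length (L e) = s) ->
  SP m L k (fun d => y ^ d) = Ay m L y ^ k.
Proof. intros hlen. induction k. rewrite SP_0; simpl; lra.
  rewrite (SP_S m s) by auto. unfold Ay. rewrite (psum_ext _ _ _ (fun t => y ^ t * (Ay m L y ^ k))).
  rewrite psum_scal_r. reflexivity.
  intros t. rewrite SP_shift0, IHk. reflexivity. Qed.

Lemma M1 m s L y k : (forall e, (e < m)%nat -> length (L e) = s) ->
  SP m L k (fun d => INR d * y ^ d) * Ay m L y = INR k * By m L y * Ay m L y ^ k.
Proof. intros hlen. induction k. rewrite SP_0; simpl; lra.
  rewrite (SP_S m s) by auto.
  rewrite (psum_ext _ _ _ (fun t => (INR t * y ^ t) * (Ay m L y ^ k) + y ^ t * SP m L k (fun d => INR d * y ^ d))).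
  rewrite psum_plus, psum_scal_r, psum_scal_r. fold (By m L y) (Ay m L y). change (psum m L (pow y)) with (Ay m L y).
  rewrite S_INR. simpl pow. transitivity (By m L y * Ay m L y ^ k * Ay m L y + Ay m L y * (SP m L k (fun d => INR d * y ^ d) * Ay m L y)). ring.
  rewrite IHk. ring.
  intros t. rewrite <- (M0 m s L y k hlen), <- !SP_scal, <- SP_plus. apply SP_ext; intros d.
  rewrite plus_INR, pow_add. ring. Qed.

Lemma M2 m s L y k : (forall e, (e < m)%nat -> length (L e) = s) ->
  SP m L k (fun d => INR d ^ 2 * y ^ d) * Ay m L y ^ 2 =
  (INR k * Cy m L y * Ay m L y + INR k * (INR k - 1) * By m L y ^ 2) * Ay m L y ^ k.
Proof. intros hlen. induction k. rewrite SP_0; simpl; lra.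
  rewrite (SP_S m s) by auto.
  rewrite (psum_ext _ _ _ (fun t => (INR t ^ 2 * y ^ t) * (Ay m L y ^ k) + (INR t * y ^ t) * (2 * SP m L k (fun d => INR d * y ^ d)) + y ^ t * SP m L k (fun d => INR d ^ 2 * y ^ d))).
  rewrite !psum_plus, !psum_scal_r. fold (By m L y) (Ay m L y) (Cy m L y). change (psum m L (pow y)) with (Ay m L y).
  rewrite S_INR, <- tech_pow_Rmult.
  transitivity (Cy m L y * Ay m L y ^ k * (Ay m L y ^ 2) + 2 * By m L y * Ay m L y * (SP m L k (fun d => INR d * y ^ d) * Ay m L y) + Ay m L y * (SP m L k (fun d => INR d ^ 2 * y ^ d) * (Ay m L y ^ 2))). ring.
  rewrite (M1 m s) by auto. rewrite IHk. rewrite <- (tech_pow_Rmult _ k). ring.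
  intros t. rewrite <- (M0 m s L y k hlen), <- !SP_scal, <- !SP_plus. apply SP_ext; intros d.
  rewrite plus_INR, pow_add. ring. Qed.
Lemma lsum_list_prod {X Y} (f : X * Y -> R) l1 l2 :
  lsum f (list_prod l1 l2) = lsum (fun a => lsum (fun b => f (a, b)) l2) l1.
Proof. induction l1; simpl; [reflexivity|]. rewrite lsum_app, lsum_map, IHl1, lsum_cons. reflexivity. Qed.

Lemma alpha_sum m s L F : (forall e, (e < m)%nat -> length (L e) = s) ->
  lsum (fun t => INR (alpha m L t) * F t) (seq 0 (S s)) = psum m L F.
Proof. intros hlen. unfold alpha.
  rewrite (lsum_ext_in _ (fun t => lsum (fun p => (if Nat.eqb (hamming (L (fst p)) (L (snd p))) t then F t else 0)) (list_prod (seq 0 m) (seq 0 m)))).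
  rewrite lsum_swap. rewrite lsum_list_prod. unfold psum. apply lsum_ext_in; intros e He.
  apply lsum_ext_in; intros f Hf. cbn [fst snd]. unfold hd. apply (lsum_seq_delta F (S s) 0).
  apply in_seq in He. pose proof (hamming_le (L e) (L f)). rewrite hlen in H by lia. unfold hd. lia.
  intros t _. rewrite INR_length_filter, Rmult_comm, <- lsum_scal. apply lsum_ext_in; intros p _.
  destruct (Nat.eqb _ t); lra. Qed.

Lemma Apoly_eq m s L y : (forall e, (e < m)%nat -> length (L e) = s) -> Apoly m s L y = Ay m L y.
Proof. intros hlen. apply (alpha_sum m s L (fun t => y ^ t) hlen). Qed.
Lemma Bpoly_eq m s L y : (forall e, (e < m)%nat -> length (L e) = s) -> Bpoly m s L y = By m L y.
Proof. intros hlen. unfold By. rewrite <- (alpha_sum m s L _ hlen). unfold Bpoly.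
  apply (lsum_ext_in (fun t => INR t * INR (alpha m L t) * y ^ t)). intros; ring. Qed.
Lemma dmax_eq m s L : (forall e, (e < m)%nat -> length (L e) = s) ->
  delta_max m s L = By m L 1 / (INR s * INR (m * m)).
Proof. intros hlen. unfold delta_max. rewrite <- (Bpoly_eq m s L 1 hlen). unfold Bpoly. f_equal.
  apply (lsum_ext_in (fun t => INR t * INR (alpha m L t))). intros; rewrite pow1; ring. Qed.

Lemma psum_one m L : psum m L (fun _ => 1) = INR m * INR m.
Proof. unfold psum. rewrite (lsum_ext_in _ (fun _ => INR m * 1)). rewrite lsum_scal, lsum_const1, length_seq. lra.
  intros. rewrite lsum_const1, length_seq. lra. Qed.
Lemma Ay1 m L : Ay m L 1 = INR m * INR m.
Proof. unfold Ay. rewrite <- (psum_one m L). apply psum_ext. intros; apply pow1. Qed.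

Lemma Tcount_eq m s L k D : (forall e, (e < m)%nat -> length (L e) = s) ->
  (forall e f, (e < m)%nat -> (f < m)%nat -> L e = L f -> e = f) ->
  INR (Tcount m L k D) = SP m L k (fun d => if Nat.leb d (D - 1) then 1 else 0).
Proof. intros hlen hinj. unfold Tcount. rewrite (words_eq m s L k hlen hinj).
  rewrite INR_fold_add, lsum_map. unfold SP. apply lsum_ext_in; intros p _.
  unfold ball_size. rewrite (words_eq m s L k hlen hinj), INR_length_filter, lsum_map. reflexivity. Qed.

Lemma words_len m s L k : (forall e, (e < m)%nat -> length (L e) = s) ->
  (forall e f, (e < m)%nat -> (f < m)%nat -> L e = L f -> e = f) ->
  INR (length (words m L k)) = INR m ^ k.
Proof. intros hlen hinj. rewrite (words_eq m s L k hlen hinj), length_map. apply paths_length. Qed.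
Lemma lsum_ge_term {X} (f : X -> R) l x : In x l -> (forall z, In z l -> 0 <= f z) -> f x <= lsum f l.
Proof. induction l; intros Hx H; [destruct Hx|]. rewrite lsum_cons. destruct Hx as [<-|Hx].
  - assert (0 <= lsum f l) by (apply lsum_nonneg; intros; apply H; right; auto). lra.
  - assert (0 <= f a) by (apply H; left; auto). assert (f x <= lsum f l) by (apply IHl; auto; intros; apply H; right; auto). lra. Qed.

Lemma psum_le m s L F G : (forall e, (e < m)%nat -> length (L e) = s) ->
  (forall d, (d <= s)%nat -> F d <= G d) -> psum m L F <= psum m L G.
Proof. intros hlen H. unfold psum. apply lsum_le_in; intros e He; apply lsum_le_in; intros f Hf.
  apply H. apply in_seq in He. pose proof (hamming_le (L e) (L f)). unfold hd. rewrite hlen in H0 by lia. lia. Qed.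

Lemma Ay_ge m L y : (1 <= m)%nat -> 0 <= y -> INR m <= Ay m L y.
Proof. intros Hm Hy. unfold Ay, psum. rewrite <- (length_seq m 0) at 1. rewrite <- lsum_const1.
  apply lsum_le_in; intros e He. apply Rle_trans with (y ^ hd L e e).
  unfold hd. rewrite hamming_refl. simpl; lra.
  apply (lsum_ge_term (fun f => y ^ hd L e f)); auto. intros; apply pow_le; auto. Qed.

Lemma By_ge0 m L y : 0 <= y -> 0 <= By m L y.
Proof. intros Hy. unfold By, psum. apply lsum_nonneg; intros; apply lsum_nonneg; intros.
  apply Rmult_le_pos; [apply pos_INR|apply pow_le; auto]. Qed.
Lemma Cy_ge0 m L y : 0 <= y -> 0 <= Cy m L y.
Proof. intros Hy. unfold Cy, psum. apply lsum_nonneg; intros; apply lsum_nonneg; intros.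
  apply Rmult_le_pos; [apply pow_le, pos_INR|apply pow_le; auto]. Qed.
Lemma Ay_ge0 m L y : 0 <= y -> 0 <= Ay m L y.
Proof. intros Hy. unfold Ay, psum. apply lsum_nonneg; intros; apply lsum_nonneg; intros.
  apply pow_le; auto. Qed.
Lemma By_le m s L y : (forall e, (e < m)%nat -> length (L e) = s) -> 0 <= y ->
  By m L y <= INR s * Ay m L y.
Proof. intros hlen Hy. unfold By, Ay. rewrite <- psum_scal. apply (psum_le m s); auto.
  intros d Hd. apply Rmult_le_compat_r. apply pow_le; auto. apply le_INR; auto. Qed.
Lemma Cy_le m s L y : (forall e, (e < m)%nat -> length (L e) = s) -> 0 <= y ->
  Cy m L y <= INR s ^ 2 * Ay m L y.
Proof. intros hlen Hy. unfold Cy, Ay. rewrite <- psum_scal. apply (psum_le m s); auto.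
  intros d Hd. apply Rmult_le_compat_r. apply pow_le; auto. apply pow_incr. split; [apply pos_INR| apply le_INR; auto]. Qed.

Lemma pow_le1 y n : 0 <= y <= 1 -> y ^ n <= 1.
Proof. intros Hy. induction n; simpl; [lra|]. pose proof (pow_le y n (proj1 Hy)). nra. Qed.

Lemma pow_le_anti y a b : 0 <= y <= 1 -> (a <= b)%nat -> y ^ b <= y ^ a.
Proof. intros Hy Hab. replace b with (a + (b - a))%nat by lia. rewrite pow_add.
  pose proof (pow_le y a (proj1 Hy)). assert (y ^ (b - a) <= 1) by (apply pow_le1; lra).
  assert (0 <= y ^ (b-a)) by (apply pow_le; lra). nra. Qed.

Lemma UB m s L k y D : (forall e, (e < m)%nat -> length (L e) = s) -> 0 < y <= 1 ->
  SP m L k (fun d => if Nat.leb d D then 1 else 0) <= Ay m L y ^ k / y ^ D.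
Proof. intros hlen Hy. rewrite <- (M0 m s L y k hlen). unfold Rdiv. rewrite Rmult_comm, <- SP_scal.
  apply SP_le. intros d. assert (0 < y ^ D) by (apply pow_lt; lra).
  assert (0 < y ^ d) by (apply pow_lt; lra).
  destruct (Nat.leb_spec d D).
  - pose proof (pow_le_anti y d D ltac:(lra) H1). apply (Rmult_le_reg_l (y ^ D)); auto.
    field_simplify; lra.
  - assert (0 < / y ^ D) by (apply Rinv_0_lt_compat; auto). nra. Qed.

Lemma CH m s L k y : (forall e, (e < m)%nat -> length (L e) = s) -> 0 < y -> 0 < Ay m L y ->
  SP m L k (fun d => y ^ d * (INR d - INR k * (By m L y / Ay m L y)) ^ 2) <= INR k * INR s ^ 2 * Ay m L y ^ k.
Proof. intros hlen Hy HA. set (a := Ay m L y). set (b := By m L y). set (c := Cy m L y).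
  set (mu := b / a). assert (Ha : 0 < a) by exact HA.
  rewrite (SP_ext _ _ _ _ (fun d => INR d ^ 2 * y ^ d + (-2 * INR k * mu) * (INR d * y ^ d) + (INR k * mu) ^ 2 * y ^ d)) by (intros; ring).
  rewrite !SP_plus, !SP_scal.
  pose proof (M0 m s L y k hlen) as E0. pose proof (M1 m s L y k hlen) as E1. pose proof (M2 m s L y k hlen) as E2.
  fold a b c in E0, E1, E2.
  set (X1 := SP m L k (fun d => INR d * y ^ d)) in *. set (X2 := SP m L k (fun d => INR d ^ 2 * y ^ d)) in *.
  change (SP m L k (pow y)) with (SP m L k (fun d => y ^ d)). rewrite E0. set (P := a ^ k) in *.
  assert (HP : 0 < P) by (apply pow_lt; auto).
  assert (X1 = INR k * b * P / a) by (apply (Rmult_eq_reg_r a); [rewrite E1; field; lra| lra]).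
  assert (X2 = (INR k * c * a + INR k * (INR k - 1) * b ^ 2) * P / a ^ 2) by (apply (Rmult_eq_reg_r (a ^ 2)); [rewrite E2; field; lra| apply pow_nonzero; lra]).
  rewrite H, H0. unfold mu.
  replace ((INR k * c * a + INR k * (INR k - 1) * b ^ 2) * P / a ^ 2 + -2 * INR k * (b / a) * (INR k * b * P / a) + (INR k * (b / a)) ^ 2 * P)
    with (INR k * P * (c / a) - INR k * P * (b / a) ^ 2) by (field; lra).
  assert (c <= INR s ^ 2 * a) by (apply (Cy_le m s L y hlen); lra).
  assert (c / a <= INR s ^ 2) by (apply Rmult_le_reg_r with a; auto; unfold Rdiv; rewrite Rmult_assoc, Rinv_l; lra).
  assert (0 <= INR k) by apply pos_INR. assert (0 <= INR k * P * (b/a)^2) by (apply Rmult_le_pos; [nra| apply pow2_ge_0]).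
  assert (INR k * P * (c / a) <= INR k * P * INR s ^ 2) by (apply Rmult_le_compat_l; nra).
  nra. Qed.
Lemma pow_exp y d : 0 < y -> y ^ d = exp (INR d * ln y).
Proof. intros Hy. rewrite <- ln_pow by auto. rewrite exp_ln; auto. apply pow_lt; auto. Qed.

Lemma LB m s L k y eps D : (forall e, (e < m)%nat -> length (L e) = s) -> 0 < y <= 1 ->
  0 < Ay m L y -> 0 < eps -> (1 <= k)%nat ->
  INR k * (By m L y / Ay m L y) + eps * INR k <= INR D ->
  Ay m L y ^ k - INR s ^ 2 * Ay m L y ^ k / (eps ^ 2 * INR k) <=
  SP m L k (fun d => if Nat.leb d D then 1 else 0) * exp (INR k * (By m L y / Ay m L y - eps) * ln y).
Proof. intros hlen Hy HA Heps Hk HD. set (mu := By m L y / Ay m L y) in *.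
  set (E := exp (INR k * (mu - eps) * ln y)).
  assert (Hkp : 0 < INR k) by (apply lt_0_INR; lia).
  assert (HE : 0 < E) by apply exp_pos.
  assert (Hln : ln y <= 0) by (rewrite <- ln_1; destruct (Req_dec y 1) as [->|Hne]; [lra| left; apply ln_increasing; lra]).
  set (w := / (eps * INR k) ^ 2).
  assert (Hw : 0 < w) by (apply Rinv_0_lt_compat; apply pow_lt; nra).
  assert (Hle : SP m L k (fun d => y ^ d + (- w) * (y ^ d * (INR d - INR k * mu) ^ 2)) <=
                SP m L k (fun d => E * (if Nat.leb d D then 1 else 0))).
  { apply SP_le; intros d. assert (Hyd : 0 < y ^ d) by (apply pow_lt; lra).
    destruct (Rle_lt_dec ((eps * INR k) ^ 2) ((INR d - INR k * mu) ^ 2)) as [H1|H1].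
    - assert (w * (INR d - INR k * mu) ^ 2 >= 1).
      { unfold w. apply Rle_ge. apply (Rmult_le_reg_l ((eps * INR k) ^ 2)). apply pow_lt; nra.
        rewrite <- Rmult_assoc, Rinv_r by (apply pow_nonzero; nra). lra. }
      assert (0 <= E * (if Nat.leb d D then 1 else 0)) by (destruct (Nat.leb d D); lra). nra.
    - assert (Hek : 0 < eps * INR k) by nra.
      assert (Hd1 : INR d < INR k * mu + eps * INR k).
      { destruct (Rlt_le_dec (INR d) (INR k * mu + eps * INR k)) as [h|h]; [exact h|exfalso].
        assert ((INR d - INR k*mu - eps*INR k) * (INR d - INR k*mu + eps*INR k) >= 0) by (apply Rle_ge, Rmult_le_pos; lra).
        simpl in H1. nra. }
      assert (Hd2 : INR k * (mu - eps) < INR d).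
      { destruct (Rlt_le_dec (INR k * (mu - eps)) (INR d)) as [h|h]; [exact h|exfalso].
        assert ((INR k*mu - INR d - eps*INR k) * (INR k*mu - INR d + eps*INR k) >= 0) by (apply Rle_ge, Rmult_le_pos; lra).
        simpl in H1. nra. }
      assert (Hdd : (d <= D)%nat) by (apply INR_le; lra).
      apply Nat.leb_le in Hdd. rewrite Hdd.
      assert (y ^ d <= E).
      { rewrite pow_exp by lra. unfold E. destruct Hln as [Hlt|Heq0].
        left. apply exp_increasing. nra. rewrite Heq0. right. f_equal. ring. }
      assert (0 <= w * (y ^ d * (INR d - INR k * mu) ^ 2)) by (apply Rmult_le_pos; [lra| apply Rmult_le_pos; [lra|apply pow2_ge_0]]).
      lra. }
  rewrite SP_plus, SP_scal, SP_scal in Hle.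
  replace (SP m L k (pow y)) with (Ay m L y ^ k) in Hle by (symmetry; apply (M0 m s L y k hlen)).
  pose proof (CH m s L k y hlen ltac:(lra) HA) as HC. fold mu in HC.
  assert (w * SP m L k (fun d => y ^ d * (INR d - INR k * mu) ^ 2) <= INR s ^ 2 * Ay m L y ^ k / (eps ^ 2 * INR k)).
  { apply Rle_trans with (w * (INR k * INR s ^ 2 * Ay m L y ^ k)). apply Rmult_le_compat_l; lra.
    unfold w. right. field. lra. }
  lra. Qed.
Lemma ln_nonpos x : x <= 0 -> ln x = 0.
Proof. intros H. unfold ln. destruct (Rlt_dec 0 x); [exfalso; lra|reflexivity]. Qed.

Lemma nfloor_spec x : 0 <= x -> INR (Defs.nfloor x) <= x /\ x - 1 < INR (Defs.nfloor x).
Proof. intros Hx. unfold Defs.nfloor. destruct (base_Int_part x) as [H1 H2].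
  assert (Hz : (0 <= Int_part x)%Z).
  { assert (IZR (-1) < IZR (Int_part x)) by (simpl; lra). apply lt_IZR in H. lia. }
  rewrite INR_IZR_INZ, Z2Nat.id by auto. lra. Qed.

Lemma nat_large x : exists N, x < INR N.
Proof. destruct (Rle_lt_dec x 0). exists 1%nat. simpl; lra.
  destruct (archimed x) as [H1 _]. assert (Hz : (0 <= up x)%Z) by (apply le_IZR; lra).
  exists (Z.to_nat (up x)). rewrite INR_IZR_INZ, Z2Nat.id by auto. lra. Qed.

Definition useq m s L delta k :=
  / INR (k * s) * log2 (INR (Tcount m L k (Defs.nfloor (delta * INR (k * s))))).

Lemma ln2_pos : 0 < ln 2.
Proof. pose proof ln_lt_2. lra. Qed.

Lemma Dbounds delta n : 0 <= delta -> 0 <= INR n ->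
  INR (Defs.nfloor (delta * INR n) - 1) <= delta * INR n /\ delta * INR n - 2 <= INR (Defs.nfloor (delta * INR n) - 1).
Proof. intros Hd Hn. assert (0 <= delta * INR n) by nra. destruct (nfloor_spec _ H) as [H1 H2].
  destruct (Defs.nfloor (delta * INR n)) as [|f]. simpl in *. lra.
  replace (S f - 1)%nat with f by lia. rewrite S_INR in *. lra. Qed.

Lemma u_upper m s L delta k y : (forall e, (e < m)%nat -> length (L e) = s) ->
  (forall e f, (e < m)%nat -> (f < m)%nat -> L e = L f -> e = f) ->
  (1 <= m)%nat -> (1 <= s)%nat -> (1 <= k)%nat -> 0 <= delta -> 0 < y <= 1 ->
  useq m s L delta k <= log2 (Ay m L y) / INR s - delta * log2 y.
Proof. intros hlen hinj Hm hs Hk Hd Hy. unfold useq, log2.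
  assert (Hs : 1 <= INR s) by (apply (le_INR 1); auto).
  assert (Hkr : 1 <= INR k) by (apply (le_INR 1); auto).
  assert (HA : 1 <= Ay m L y) by (apply Rle_trans with (INR m); [apply (le_INR 1); auto| apply Ay_ge; [auto|lra]]).
  assert (HlnA : 0 <= ln (Ay m L y)) by (rewrite <- ln_1; apply ln_le; lra).
  assert (Hlny : ln y <= 0) by (rewrite <- ln_1; apply ln_le; lra).
  pose proof ln2_pos.
  rewrite mult_INR. set (n := INR k * INR s).
  assert (Hn : 0 < n) by (unfold n; nra).
  set (D := (Defs.nfloor (delta * n) - 1)%nat).
  destruct (Dbounds delta (k * s) Hd (pos_INR _)) as [HD1 _]. rewrite mult_INR in HD1. fold n D in HD1.
  rewrite (Tcount_eq m s L k _ hlen hinj). fold D.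
  set (T := SP m L k (fun d => if Nat.leb d D then 1 else 0)).
  assert (HT : T <= Ay m L y ^ k / y ^ D) by apply (UB m s L k y D hlen Hy).
  assert (Hrhs : 0 <= ln (Ay m L y) / ln 2 / INR s - delta * (ln y / ln 2)).
  { assert (0 <= ln (Ay m L y) / ln 2 / INR s) by (unfold Rdiv; repeat apply Rmult_le_pos; try apply Rlt_le, Rinv_0_lt_compat; lra).
    assert (ln y / ln 2 <= 0) by (unfold Rdiv; assert (0 < / ln 2) by (apply Rinv_0_lt_compat; lra); nra). nra. }
  destruct (Rle_lt_dec T 0) as [HT0|HT0].
  { rewrite ln_nonpos by auto. unfold Rdiv at 1. rewrite Rmult_0_l, Rmult_0_r. auto. }
  assert (HyD : 0 < y ^ D) by (apply pow_lt; lra).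
  assert (ln T <= INR k * ln (Ay m L y) - INR D * ln y).
  { apply Rle_trans with (ln (Ay m L y ^ k / y ^ D)). apply ln_le; auto.
    unfold Rdiv. rewrite ln_mult, ln_Rinv, !ln_pow; try lra. apply pow_lt; lra. apply Rinv_0_lt_compat; auto. }
  assert (INR k * ln (Ay m L y) - INR D * ln y <= INR k * ln (Ay m L y) - delta * n * ln y) by nra.
  apply Rle_trans with (/ n * ((INR k * ln (Ay m L y) - delta * n * ln y) / ln 2)).
  { apply Rmult_le_compat_l. left; apply Rinv_0_lt_compat; auto. unfold Rdiv. apply Rmult_le_compat_r. left; apply Rinv_0_lt_compat; auto. lra. }
  right. unfold n. field. lra. Qed.
Lemma u_lower m s L delta y eps : (forall e, (e < m)%nat -> length (L e) = s) ->
  (forall e f, (e < m)%nat -> (f < m)%nat -> L e = L f -> e = f) ->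
  (1 <= m)%nat -> (1 <= s)%nat -> 0 <= delta -> 0 < y <= 1 -> 0 < eps ->
  By m L y / Ay m L y + 2 * eps <= INR s * delta ->
  exists K, forall k, (K <= k)%nat ->
    (log2 (Ay m L y) - (By m L y / Ay m L y - eps) * log2 y) / INR s - / (INR k * INR s) <= useq m s L delta k.
Proof. intros hlen hinj Hm hs Hd Hy Heps Hmu.
  assert (Hs : 1 <= INR s) by (apply (le_INR 1); auto).
  assert (HA : 1 <= Ay m L y) by (apply Rle_trans with (INR m); [apply (le_INR 1); auto| apply Ay_ge; [auto|lra]]).
  pose proof ln2_pos.
  set (mu := By m L y / Ay m L y) in *.
  assert (Hmu0 : 0 <= mu) by (unfold mu; apply Rmult_le_pos; [apply By_ge0; lra| left; apply Rinv_0_lt_compat; lra]).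
  destruct (nat_large (2 / eps + 2 * INR s ^ 2 / eps ^ 2 + 1)) as [K HK].
  exists K. intros k Hk.
  assert (HkK : INR K <= INR k) by (apply le_INR; auto).
  assert (Hkr : 1 <= INR k).
  { assert (0 <= 2 / eps) by (unfold Rdiv; apply Rmult_le_pos; [lra| left; apply Rinv_0_lt_compat; lra]).
    assert (0 <= 2 * INR s ^ 2 / eps ^ 2) by (unfold Rdiv; apply Rmult_le_pos; [nra| left; apply Rinv_0_lt_compat; nra]). lra. }
  assert (Hk1 : (1 <= k)%nat) by (apply INR_le; simpl; lra).
  assert (Hek : 2 <= eps * INR k).
  { assert (2 / eps <= INR k).
    { assert (0 <= 2 * INR s ^ 2 / eps ^ 2) by (unfold Rdiv; apply Rmult_le_pos; [nra| left; apply Rinv_0_lt_compat; nra]). lra. }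
    apply (Rmult_le_compat_l eps) in H0; [|lra]. unfold Rdiv in H0. rewrite <- Rmult_assoc, (Rmult_comm eps 2), Rmult_assoc, Rinv_r in H0 by lra. lra. }
  assert (Hch : INR s ^ 2 / (eps ^ 2 * INR k) <= / 2).
  { assert (2 * INR s ^ 2 / eps ^ 2 <= INR k).
    { assert (0 <= 2 / eps) by (unfold Rdiv; apply Rmult_le_pos; [lra| left; apply Rinv_0_lt_compat; lra]). lra. }
    assert (0 < eps ^ 2) by nra.
    apply (Rmult_le_reg_r (2 * (eps ^ 2 * INR k))). nra.
    replace (INR s ^ 2 / (eps ^ 2 * INR k) * (2 * (eps ^ 2 * INR k))) with (2 * INR s ^ 2) by (field; lra).
    replace (/ 2 * (2 * (eps ^ 2 * INR k))) with (eps ^ 2 * INR k) by field.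
    apply (Rmult_le_compat_l (eps ^ 2)) in H0; [|lra].
    replace (eps ^ 2 * (2 * INR s ^ 2 / eps ^ 2)) with (2 * INR s ^ 2) in H0 by (field; lra). lra. }
  unfold useq. rewrite mult_INR. set (n := INR k * INR s).
  assert (Hn : 0 < n) by (unfold n; nra).
  destruct (Dbounds delta (k * s) Hd (pos_INR _)) as [_ HD2]. rewrite mult_INR in HD2. fold n in HD2.
  set (D := (Defs.nfloor (delta * n) - 1)%nat) in *.
  rewrite (Tcount_eq m s L k _ hlen hinj). fold D.
  set (T := SP m L k (fun d => if Nat.leb d D then 1 else 0)).
  assert (HDk : INR k * mu + eps * INR k <= INR D).
  { assert (INR k * (mu + 2 * eps) <= INR k * (INR s * delta)) by (apply Rmult_le_compat_l; lra).
    unfold n in HD2. nra. }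
  pose proof (LB m s L k y eps D hlen Hy ltac:(lra) Heps Hk1 HDk) as HL. fold mu T in HL.
  set (E := exp (INR k * (mu - eps) * ln y)) in *.
  assert (HP : 0 < Ay m L y ^ k) by (apply pow_lt; lra).
  assert (HTE : Ay m L y ^ k / 2 <= T * E).
  { assert (INR s ^ 2 * Ay m L y ^ k / (eps ^ 2 * INR k) <= Ay m L y ^ k / 2).
    { unfold Rdiv. rewrite (Rmult_comm (INR s ^ 2)), Rmult_assoc. apply Rmult_le_compat_l; lra. }
    lra. }
  assert (HE : 0 < E) by apply exp_pos.
  assert (HT : 0 < T) by (destruct (Rle_lt_dec T 0); [nra|auto]).
  assert (Hln : ln (Ay m L y ^ k / 2) <= ln T + INR k * (mu - eps) * ln y).
  { apply Rle_trans with (ln (T * E)). apply ln_le; auto. apply Rdiv_lt_0_compat; lra.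
    rewrite ln_mult by auto. unfold E. rewrite ln_exp. lra. }
  unfold Rdiv in Hln. rewrite ln_mult, ln_Rinv, ln_pow in Hln; try lra; try (apply Rinv_0_lt_compat; lra).
  unfold log2. apply (Rmult_le_reg_l (n * ln 2)). nra.
  replace (n * ln 2 * (/ n * (ln T / ln 2))) with (ln T) by (field; lra).
  replace (n * ln 2 * ((ln (Ay m L y) / ln 2 - (mu - eps) * (ln y / ln 2)) / INR s - / n))
    with (INR k * ln (Ay m L y) - INR k * (mu - eps) * ln y - ln 2) by (unfold n; field; lra).
  lra. Qed.
Lemma Ttilde_val m s L delta v y0 : (forall e, (e < m)%nat -> length (L e) = s) ->
  (forall e f, (e < m)%nat -> (f < m)%nat -> L e = L f -> e = f) ->
  (1 <= m)%nat -> (1 <= s)%nat -> 0 <= delta -> 0 < y0 <= 1 ->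
  v = log2 (Ay m L y0) / INR s - delta * log2 y0 ->
  (forall eta, 0 < eta -> exists y eps, 0 < y <= 1 /\ 0 < eps /\
      By m L y / Ay m L y + 2 * eps <= INR s * delta /\
      v - eta < (log2 (Ay m L y) - (By m L y / Ay m L y - eps) * log2 y) / INR s) ->
  Ttilde m s L delta = Finite v.
Proof. intros hlen hinj Hm hs Hd Hy0 Hv Hlow.
  change (LimSup_seq (useq m s L delta) = Finite v). apply is_LimSup_seq_unique.
  intros eps. split.
  - intros N. destruct (Hlow (eps / 2)) as [y [e [Hy [He [Hmu Hlt]]]]]. destruct eps; simpl; lra.
    destruct (u_lower m s L delta y e hlen hinj Hm hs Hd Hy He Hmu) as [K HK].
    destruct (nat_large (2 / eps)) as [K2 HK2].
    set (n := (N + K + K2 + 1)%nat). exists n. split; [unfold n; lia|].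
    specialize (HK n ltac:(unfold n; lia)).
    assert (Hs : 1 <= INR s) by (apply (le_INR 1); auto).
    assert (HnK : INR K2 + 1 <= INR n) by (unfold n; rewrite <- S_INR; apply le_INR; lia).
    assert (Hep := cond_pos eps).
    assert (/ (INR n * INR s) < eps / 2).
    { pose proof (pos_INR K2). assert (0 < INR n) by lra. assert (Hq : 2 / eps < INR n * INR s) by nra.
      apply (Rmult_lt_reg_l (INR n * INR s)). nra. rewrite Rinv_r by nra.
      apply (Rmult_lt_compat_r (eps / 2)) in Hq; [|lra]. replace (2 / eps * (eps / 2)) with 1 in Hq by (field; lra). lra. }
    lra.
  - exists 1%nat. intros n Hn. pose proof (u_upper m s L delta n y0 hlen hinj Hm hs Hn Hd Hy0).
    assert (Hep := cond_pos eps). lra. Qed.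

Lemma LimSup_ev_const (u : nat -> R) c : (forall k, (1 <= k)%nat -> u k = c) -> LimSup_seq u = Finite c.
Proof. intros H. apply is_LimSup_seq_unique. intros eps. assert (Hep := cond_pos eps). split.
  - intros N. exists (S N). split; [lia|]. rewrite H by lia. lra.
  - exists 1%nat. intros n Hn. rewrite H by lia. lra. Qed.

Lemma Cap_val m s L : (forall e, (e < m)%nat -> length (L e) = s) ->
  (forall e f, (e < m)%nat -> (f < m)%nat -> L e = L f -> e = f) ->
  (1 <= m)%nat -> (1 <= s)%nat -> Cap m s L = Finite (log2 (INR m) / INR s).
Proof. intros hlen hinj Hm hs. apply LimSup_ev_const. intros k Hk.
  rewrite (words_len m s L k hlen hinj). unfold log2. rewrite ln_pow by (apply (lt_INR 0); lia).
  rewrite mult_INR. assert (1 <= INR s) by (apply (le_INR 1); auto). assert (1 <= INR k) by (apply (le_INR 1); auto).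
  pose proof ln2_pos. field. lra. Qed.

Lemma nfloor0 : Defs.nfloor 0 = 0%nat.
Proof. destruct (nfloor_spec 0 (Rle_refl 0)) as [H _]. destruct (Defs.nfloor 0); auto.
  rewrite S_INR in H. pose proof (pos_INR n). lra. Qed.

Lemma Ttilde0 m s L : (forall e, (e < m)%nat -> length (L e) = s) ->
  (forall e f, (e < m)%nat -> (f < m)%nat -> L e = L f -> e = f) ->
  (1 <= m)%nat -> (1 <= s)%nat -> Ttilde m s L 0 = Finite (log2 (Ay m L 0) / INR s).
Proof. intros hlen hinj Hm hs. apply LimSup_ev_const. intros k Hk.
  rewrite Rmult_0_l, nfloor0, (Tcount_eq m s L k _ hlen hinj).
  rewrite (SP_ext _ _ _ _ (fun d => 0 ^ d)).
  rewrite (M0 m s L 0 k hlen). unfold log2.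
  assert (HA : 1 <= Ay m L 0) by (apply Rle_trans with (INR m); [apply (le_INR 1); auto| apply Ay_ge; [auto|lra]]).
  rewrite ln_pow by lra.
  rewrite mult_INR. assert (1 <= INR s) by (apply (le_INR 1); auto). assert (1 <= INR k) by (apply (le_INR 1); auto).
  pose proof ln2_pos. field. lra.
  intros [|d]; simpl; [reflexivity|]. ring. Qed.
Lemma pow_lt_strict a b n : 0 <= a < b -> (1 <= n)%nat -> a ^ n < b ^ n.
Proof. intros Hab Hn. induction n; [lia|]. destruct n. simpl; lra.
  assert (a ^ S n < b ^ S n) by (apply IHn; lia). pose proof (pow_le a (S n) (proj1 Hab)).
  change (a * a ^ S n < b * b ^ S n). nra. Qed.

Lemma pair_term a b y1 y2 : 0 <= y1 <= y2 ->
  (INR a - INR b) * (y1 ^ a * y2 ^ b - y2 ^ a * y1 ^ b) <= 0.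
Proof. intros Hy.
  assert (gen : forall a b, (a <= b)%nat -> 0 <= y1 ^ a * y2 ^ b - y2 ^ a * y1 ^ b).
  { intros a' b' Hab. replace b' with (a' + (b' - a'))%nat by lia. rewrite !pow_add.
    pose proof (pow_le y1 a' (proj1 Hy)). assert (0 <= y2 ^ a') by (apply pow_le; lra).
    pose proof (pow_incr y1 y2 (b' - a') Hy).
    assert (0 <= y1 ^ a' * y2 ^ a') by (apply Rmult_le_pos; auto). nra. }
  destruct (Nat.le_ge_cases a b) as [H|H].
  - pose proof (gen a b H). assert (INR a <= INR b) by (apply le_INR; auto). nra.
  - pose proof (gen b a H). assert (INR b <= INR a) by (apply le_INR; auto). nra. Qed.

Lemma lsum_prod {X Y} (f : X -> R) (g : Y -> R) l1 l2 :
  lsum f l1 * lsum g l2 = lsum (fun x => lsum (fun y => f x * g y) l2) l1.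
Proof. rewrite Rmult_comm, <- lsum_scal. apply lsum_ext_in; intros x _.
  rewrite Rmult_comm, <- lsum_scal. apply lsum_ext_in; intros; ring. Qed.

Definition PL m := list_prod (seq 0 m) (seq 0 m).
Definition hp L (p : nat * nat) := hd L (fst p) (snd p).

Lemma psum_PL m L F : psum m L F = lsum (fun p => F (hp L p)) (PL m).
Proof. unfold PL. rewrite lsum_list_prod. reflexivity. Qed.

Lemma mu_strict m s L y1 y2 : (forall e, (e < m)%nat -> length (L e) = s) ->
  (forall e f, (e < m)%nat -> (f < m)%nat -> L e = L f -> e = f) ->
  (2 <= m)%nat -> 0 <= y1 < y2 -> By m L y1 * Ay m L y2 < By m L y2 * Ay m L y1.
Proof. intros hlen hinj Hm Hy. unfold By, Ay. rewrite !psum_PL, !lsum_prod.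
  set (G := fun p q => INR (hp L p) * (y1 ^ hp L p * y2 ^ hp L q - y2 ^ hp L p * y1 ^ hp L q)).
  assert (Hd : lsum (fun x => lsum (fun y => INR (hp L x) * y1 ^ hp L x * y2 ^ hp L y) (PL m)) (PL m) -
     lsum (fun x => lsum (fun y => INR (hp L x) * y2 ^ hp L x * y1 ^ hp L y) (PL m)) (PL m)
     = lsum (fun x => lsum (fun y => G x y) (PL m)) (PL m)).
  { unfold Rminus. rewrite <- (Rmult_1_l (lsum (fun x => lsum (fun y => INR (hp L x) * y2 ^ hp L x * y1 ^ hp L y) (PL m)) (PL m))).
    rewrite Ropp_mult_distr_l, <- lsum_scal, <- lsum_plus. apply lsum_ext_in; intros x _.
    rewrite <- lsum_scal, <- lsum_plus. apply lsum_ext_in; intros y _. unfold G. ring. }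
  assert (Hsw : lsum (fun x => lsum (fun y => G x y) (PL m)) (PL m) = lsum (fun x => lsum (fun y => G y x) (PL m)) (PL m)) by apply lsum_swap.
  assert (Hneg : lsum (fun x => lsum (fun y => G x y + G y x) (PL m)) (PL m) < lsum (fun x => lsum (fun y => 0) (PL m)) (PL m)).
  { assert (Hle : forall x y, G x y + G y x <= 0).
    { intros x y. unfold G. pose proof (pair_term (hp L x) (hp L y) y1 y2 ltac:(lra)). nra. }
    assert (H01 : In (0%nat, 0%nat) (PL m) /\ In (0%nat, 1%nat) (PL m)).
    { unfold PL. split; apply in_prod; apply in_seq; lia. }
    assert (Hh0 : hp L (0%nat, 0%nat) = 0%nat) by (unfold hp, hd; simpl; apply hamming_refl).
    assert (Hh1 : (1 <= hp L (0%nat, 1%nat))%nat).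
    { unfold hp, hd; simpl. destruct (hamming (L 0%nat) (L 1%nat)) eqn:E; [|lia]. exfalso.
      apply hamming_zero in E; [|rewrite !hlen by lia; auto]. apply hinj in E; lia. }
    apply lsum_lt_in.
    - intros x _. apply lsum_le_in. intros; apply Hle.
    - exists (0%nat, 0%nat). split; [apply H01|]. apply lsum_lt_in.
      + intros; apply Hle.
      + exists (0%nat, 1%nat). split; [apply H01|]. unfold G. rewrite Hh0. simpl (INR 0). simpl (_ ^ 0).
        assert (y1 ^ hp L (0%nat, 1%nat) < y2 ^ hp L (0%nat, 1%nat)) by (apply pow_lt_strict; auto; lra).
        assert (1 <= INR (hp L (0%nat, 1%nat))) by (apply (le_INR 1); auto). nra. }
  rewrite lsum_zero, lsum_zero in Hneg.
  rewrite (lsum_ext_in (fun x => lsum (fun y => G x y + G y x) (PL m)) (fun x => lsum (fun y => G x y) (PL m) + lsum (fun y => G y x) (PL m))) in Hneg by (intros; apply lsum_plus).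
  rewrite lsum_plus, <- Hsw in Hneg.
  assert (E1 : forall y, (fun x => lsum (fun y0 => INR (hp L x) * y ^ hp L x * y1 ^ hp L y0) (PL m)) = fun x => lsum (fun y0 => INR (hp L x) * y ^ hp L x * y1 ^ hp L y0) (PL m)) by reflexivity.
  lra. Qed.
Lemma poly_cont (c : nat -> R) l x :
  continuity_pt (fun y => fold_right Rplus 0 (map (fun t => c t * y ^ t) l)) x.
Proof. induction l; simpl.
  - apply continuity_pt_const. intros a b; reflexivity.
  - apply (continuity_pt_ext (plus_fct (fun y => c a * y ^ a) (fun y => fold_right Rplus 0 (map (fun t => c t * y ^ t) l)))).
    intros; reflexivity.
    apply continuity_pt_plus; auto.
    apply (continuity_pt_ext (mult_fct (fun _ => c a) (fun y => y ^ a))). intros; reflexivity.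
    apply continuity_pt_mult. apply continuity_pt_const; intros u v; reflexivity.
    apply derivable_continuous_pt, derivable_pt_pow. Qed.

Lemma Apoly_cont m s L x : continuity_pt (Apoly m s L) x.
Proof. unfold Apoly. apply (poly_cont (fun t => INR (alpha m L t))). Qed.
Lemma Bpoly_cont m s L x : continuity_pt (Bpoly m s L) x.
Proof. unfold Bpoly. apply (poly_cont (fun t => INR t * INR (alpha m L t))). Qed.

Lemma ln_cont x : 0 < x -> continuity_pt ln x.
Proof. intros H. apply derivable_continuous_pt. exists (/ x). apply derivable_pt_lim_ln; auto. Qed.

Lemma delta_cont m s L x : (forall e, (e < m)%nat -> length (L e) = s) -> (1 <= m)%nat -> (1 <= s)%nat -> 0 <= x ->
  continuity_pt (delta_y m s L) x.
Proof. intros hlen Hm hs Hx. unfold delta_y.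
  apply (continuity_pt_ext (div_fct (Bpoly m s L) (mult_fct (fun _ => INR s) (Apoly m s L)))). intros; reflexivity.
  apply continuity_pt_div. apply Bpoly_cont. apply continuity_pt_mult. apply continuity_pt_const; intros u v; reflexivity.
  apply Apoly_cont. unfold mult_fct. rewrite (Apoly_eq m s L x hlen).
  assert (1 <= INR s) by (apply (le_INR 1); auto). assert (INR m <= Ay m L x) by (apply Ay_ge; auto).
  assert (1 <= INR m) by (apply (le_INR 1); auto). nra. Qed.

Definition phi m s L y := (log2 (Apoly m s L y) - Bpoly m s L y / Apoly m s L y * log2 y) / INR s.

Lemma phi_cont m s L x : (forall e, (e < m)%nat -> length (L e) = s) -> (1 <= m)%nat -> (1 <= s)%nat -> 0 < x ->
  continuity_pt (phi m s L) x.
Proof. intros hlen Hm hs Hx. unfold phi, log2.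
  assert (HA : 0 < Apoly m s L x).
  { rewrite (Apoly_eq m s L x hlen). assert (INR m <= Ay m L x) by (apply Ay_ge; auto; lra).
    assert (1 <= INR m) by (apply (le_INR 1); auto). lra. }
  assert (Hs : 1 <= INR s) by (apply (le_INR 1); auto).
  apply (continuity_pt_ext (mult_fct (minus_fct (mult_fct (comp ln (Apoly m s L)) (fun _ => / ln 2))
      (mult_fct (div_fct (Bpoly m s L) (Apoly m s L)) (mult_fct ln (fun _ => / ln 2)))) (fun _ => / INR s))).
  intros; reflexivity.
  assert (Hc : forall c, continuity_pt (fun _ => c) x) by (intros c; apply continuity_pt_const; intros u v; reflexivity).
  apply continuity_pt_mult; auto. apply continuity_pt_minus; apply continuity_pt_mult; auto.
  apply continuity_pt_comp. apply Apoly_cont. apply ln_cont; auto.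
  apply continuity_pt_div; [apply Bpoly_cont|apply Apoly_cont|lra].
  apply continuity_pt_mult; auto. apply ln_cont; auto. Qed.

Lemma cont_approx_left f x eta : continuity_pt f x -> 0 < x -> 0 < eta ->
  exists y, 0 < y < x /\ Rabs (f y - f x) < eta.
Proof. intros Hc Hx He. destruct (Hc eta He) as [alp [Ha H]].
  set (y := x - Rmin alp x / 2).
  assert (0 < Rmin alp x) by (apply Rmin_glb_lt; lra). assert (Rmin alp x <= alp) by apply Rmin_l.
  assert (Rmin alp x <= x) by apply Rmin_r.
  exists y. split. unfold y; lra. apply (H y). split. split; [exact I| unfold y; lra].
  simpl. unfold R_dist. unfold y. rewrite Rabs_left; lra. Qed.
Lemma log2_1 : log2 1 = 0.
Proof. unfold log2. rewrite ln_1. unfold Rdiv; ring. Qed.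

Lemma Ay_pos m L y : (1 <= m)%nat -> 0 <= y -> 0 < Ay m L y.
Proof. intros Hm Hy. assert (INR m <= Ay m L y) by (apply Ay_ge; auto).
  assert (1 <= INR m) by (apply (le_INR 1); auto). lra. Qed.

Lemma F3 m s L delta : (forall e, (e < m)%nat -> length (L e) = s) ->
  (forall e f, (e < m)%nat -> (f < m)%nat -> L e = L f -> e = f) ->
  (1 <= m)%nat -> (1 <= s)%nat ->
  By m L 1 / (INR s * Ay m L 1) < delta ->
  Ttilde m s L delta = Finite (log2 (Ay m L 1) / INR s).
Proof. intros hlen hinj Hm hs Hd.
  assert (Hs : 1 <= INR s) by (apply (le_INR 1); auto).
  assert (HA := Ay_pos m L 1 Hm ltac:(lra)). assert (HB := By_ge0 m L 1 ltac:(lra)).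
  assert (H0 : 0 <= By m L 1 / (INR s * Ay m L 1)) by (apply Rmult_le_pos; [lra| left; apply Rinv_0_lt_compat; nra]).
  apply (Ttilde_val m s L delta _ 1); auto; try lra.
  rewrite log2_1. ring.
  intros eta Heta. exists 1, ((INR s * delta - By m L 1 / Ay m L 1) / 2).
  assert (By m L 1 / Ay m L 1 < INR s * delta).
  { replace (By m L 1 / Ay m L 1) with (INR s * (By m L 1 / (INR s * Ay m L 1))) by (field; lra).
    apply Rmult_lt_compat_l; lra. }
  repeat split; try lra. rewrite log2_1. lra. Qed.

Lemma F4 m s L y0 : (forall e, (e < m)%nat -> length (L e) = s) ->
  (forall e f, (e < m)%nat -> (f < m)%nat -> L e = L f -> e = f) ->
  (2 <= m)%nat -> (1 <= s)%nat -> 0 < y0 <= 1 ->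
  Ttilde m s L (delta_y m s L y0) = Finite (phi m s L y0).
Proof. intros hlen hinj Hm hs Hy0.
  assert (Hs : 1 <= INR s) by (apply (le_INR 1); auto).
  assert (Hm1 : (1 <= m)%nat) by lia.
  assert (HA0 := Ay_pos m L y0 Hm1 ltac:(lra)). assert (HB0 := By_ge0 m L y0 ltac:(lra)).
  assert (Hdy : delta_y m s L y0 = By m L y0 / Ay m L y0 / INR s).
  { unfold delta_y. rewrite (Apoly_eq m s L y0 hlen), (Bpoly_eq m s L y0 hlen). field. lra. }
  rewrite Hdy.
  apply (Ttilde_val m s L _ _ y0); auto.
  - apply Rmult_le_pos; [apply Rmult_le_pos|]; try lra; left; apply Rinv_0_lt_compat; lra.
  - unfold phi. rewrite (Apoly_eq m s L y0 hlen), (Bpoly_eq m s L y0 hlen). field. lra.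
  - intros eta Heta.
    destruct (cont_approx_left (phi m s L) y0 (eta / 2) (phi_cont m s L y0 hlen Hm1 hs ltac:(lra)) ltac:(lra) ltac:(lra)) as [y [Hy Hphi]].
    assert (HA := Ay_pos m L y Hm1 ltac:(lra)). assert (HB := By_ge0 m L y ltac:(lra)).
    pose proof (mu_strict m s L y y0 hlen hinj Hm ltac:(lra)) as Hst.
    set (mu := By m L y / Ay m L y). set (mu0 := By m L y0 / Ay m L y0).
    assert (Hgap : mu < mu0).
    { unfold mu, mu0. apply (Rmult_lt_reg_r (Ay m L y * Ay m L y0)). nra.
      replace (By m L y / Ay m L y * (Ay m L y * Ay m L y0)) with (By m L y * Ay m L y0) by (field; lra).
      replace (By m L y0 / Ay m L y0 * (Ay m L y * Ay m L y0)) with (By m L y0 * Ay m L y) by (field; lra). lra. }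
    set (lam := - log2 y).
    assert (Hlam : 0 <= lam).
    { unfold lam, log2. assert (ln y < 0) by (rewrite <- ln_1; apply ln_increasing; lra).
      pose proof ln2_pos. assert (0 < / ln 2) by (apply Rinv_0_lt_compat; lra). unfold Rdiv. nra. }
    set (eps := Rmin ((mu0 - mu) / 2) (eta * INR s / (2 * (1 + lam)))).
    assert (He1 : eps <= (mu0 - mu) / 2) by apply Rmin_l.
    assert (He2 : eps <= eta * INR s / (2 * (1 + lam))) by apply Rmin_r.
    assert (Hepos : 0 < eps) by (apply Rmin_glb_lt; [lra| apply Rdiv_lt_0_compat; nra]).
    exists y, eps. split; [lra|]. split; [auto|]. split.
    + replace (INR s * (mu0 / INR s)) with mu0 by (field; lra). fold mu. lra.
    + unfold phi in Hphi. rewrite (Apoly_eq m s L y hlen), (Bpoly_eq m s L y hlen), (Apoly_eq m s L y0 hlen), (Bpoly_eq m s L y0 hlen) in Hphi.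
      fold mu mu0 in Hphi. fold mu. replace (log2 y) with (- lam) in * by (unfold lam; ring).
      apply Rabs_def2 in Hphi. destruct Hphi as [Hp1 Hp2].
      assert (eps * lam <= eta * INR s / 2).
      { apply Rle_trans with (eta * INR s / (2 * (1 + lam)) * lam). apply Rmult_le_compat_r; lra.
        apply (Rmult_le_reg_r (2 * (1 + lam))). nra.
        replace (eta * INR s / (2 * (1 + lam)) * lam * (2 * (1 + lam))) with (eta * INR s * lam) by (field; lra). nra. }
      assert (eps * lam / INR s <= eta / 2).
      { apply (Rmult_le_reg_r (INR s)). lra. replace (eps * lam / INR s * INR s) with (eps * lam) by (field; lra). lra. }
      replace ((log2 (Ay m L y) - (mu - eps) * - lam) / INR s) with ((log2 (Ay m L y) - mu * - lam) / INR s - eps * lam / INR s) by (field; lra).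
      unfold phi. rewrite (Apoly_eq m s L y0 hlen), (Bpoly_eq m s L y0 hlen). fold mu0. lra. Qed.
Lemma R_GV_val m s L delta c t : Cap m s L = Finite c -> Ttilde m s L delta = Finite t ->
  R_GV m s L delta = Finite (2 * c - t).
Proof. intros H1 H2. unfold R_GV. rewrite H1, H2. simpl. f_equal; ring. Qed.

Lemma log2_0 : log2 0 = 0.
Proof. unfold log2. rewrite ln_nonpos by lra. unfold Rdiv; ring. Qed.

Lemma psum0 m L : psum m L (fun _ => 0) = 0.
Proof. unfold psum. rewrite (lsum_ext_in _ (fun _ => 0)); [apply lsum_zero|]. intros; apply lsum_zero. Qed.

Lemma By0 m L : By m L 0 = 0.
Proof. unfold By. transitivity (psum m L (fun _ => 0)); [|apply psum0]. apply psum_ext. intros [|d]; simpl; ring. Qed.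

Lemma m1_A L y : Ay 1 L y = 1.
Proof. unfold Ay, psum, lsum. simpl. unfold hd. rewrite hamming_refl. simpl. ring. Qed.
Lemma m1_B L y : By 1 L y = 0.
Proof. unfold By, psum, lsum. simpl. unfold hd. rewrite hamming_refl. simpl. ring. Qed.

Lemma delta_y_eq m s L y : (forall e, (e < m)%nat -> length (L e) = s) ->
  delta_y m s L y = By m L y / (INR s * Ay m L y).
Proof. intros hlen. unfold delta_y. rewrite (Apoly_eq m s L y hlen), (Bpoly_eq m s L y hlen). reflexivity. Qed.

Lemma rho_phi m s L y : (forall e, (e < m)%nat -> length (L e) = s) -> (1 <= m)%nat -> (1 <= s)%nat -> 0 <= y ->
  rho_y m s L y = 2 * (log2 (INR m) / INR s) - phi m s L y.
Proof. intros hlen Hm hs Hy. unfold rho_y, phi. rewrite (Apoly_eq m s L y hlen), (Bpoly_eq m s L y hlen).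
  assert (HA := Ay_pos m L y Hm Hy). assert (Hs : 1 <= INR s) by (apply (le_INR 1); auto).
  assert (Hmr : 1 <= INR m) by (apply (le_INR 1); auto).
  assert (log2 (INR (m * m) / Ay m L y) = 2 * log2 (INR m) - log2 (Ay m L y)).
  { unfold log2, Rdiv. rewrite mult_INR, ln_mult, ln_mult, ln_Rinv; try lra; try nra.
    apply Rinv_0_lt_compat; lra. }
  rewrite H. field. lra. Qed.

Lemma Ttilde0' m s L : (forall e, (e < m)%nat -> length (L e) = s) ->
  (forall e f, (e < m)%nat -> (f < m)%nat -> L e = L f -> e = f) ->
  (1 <= m)%nat -> (1 <= s)%nat -> Ttilde m s L 0 = Finite (phi m s L 0).
Proof. intros hlen hinj Hm hs. rewrite (Ttilde0 m s L hlen hinj Hm hs). unfold phi.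
  rewrite (Apoly_eq m s L 0 hlen), log2_0. f_equal. unfold Rdiv; ring. Qed.

Lemma phi1 m s L : (forall e, (e < m)%nat -> length (L e) = s) -> phi m s L 1 = log2 (Ay m L 1) / INR s.
Proof. intros hlen. unfold phi. rewrite (Apoly_eq m s L 1 hlen), log2_1. f_equal. ring. Qed.

Lemma m0_paths k : (1 <= k)%nat -> paths 0 k = [].
Proof. intros Hk. destruct k; [lia|reflexivity]. Qed.
Lemma m0_RGV s L delta : (forall e, (e < 0)%nat -> length (L e) = s) ->
  (forall e f, (e < 0)%nat -> (f < 0)%nat -> L e = L f -> e = f) ->
  R_GV 0 s L delta = Finite 0.
Proof. intros hlen hinj.
  assert (HC : Cap 0 s L = Finite 0).
  { apply LimSup_ev_const. intros k Hk. rewrite (words_len 0 s L k hlen hinj). simpl INR.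
    rewrite pow_i by lia. rewrite log2_0. ring. }
  assert (HT : Ttilde 0 s L delta = Finite 0).
  { apply LimSup_ev_const. intros k Hk. rewrite (Tcount_eq 0 s L k _ hlen hinj).
    unfold SP. rewrite m0_paths by auto. rewrite lsum_nil, log2_0. ring. }
  rewrite (R_GV_val _ _ _ _ _ _ HC HT). f_equal. ring. Qed.

Lemma m0_A L y : Ay 0 L y = 0.
Proof. reflexivity. Qed.
Lemma m0_B L y : By 0 L y = 0.
Proof. reflexivity. Qed.

Theorem corollary2 (m s : nat) (L : nat -> list bool)
  (hs : (1 <= s)%nat)
  (hlen : forall e, (e < m)%nat -> length (L e) = s)
  (hinj : forall e f, (e < m)%nat -> (f < m)%nat -> L e = L f -> e = f) :
  forall (delta : R) (r : Rbar),
    ((0 <= delta <= 1 /\ R_GV m s L delta = r) <->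
     ((exists y : R, 0 <= y <= 1 /\ delta = delta_y m s L y
                     /\ r = Finite (rho_y m s L y))
      \/ (delta_max m s L <= delta <= 1 /\ r = Finite 0))).
Proof. intros delta r.
  assert (Hs : 1 <= INR s) by (apply (le_INR 1); auto).
  destruct m as [|m'].
  -
    rewrite (m0_RGV s L delta hlen hinj).
    assert (Hdy : forall y, delta_y 0 s L y = 0).
    { intros y. rewrite (delta_y_eq 0 s L y hlen), m0_B. unfold Rdiv; ring. }
    assert (Hry : forall y, rho_y 0 s L y = 0).
    { intros y. unfold rho_y. rewrite (Apoly_eq 0 s L y hlen), (Bpoly_eq 0 s L y hlen), m0_A, m0_B.
      simpl INR. unfold Rdiv. rewrite !Rmult_0_l, log2_0. ring. }
    assert (Hdm : delta_max 0 s L = 0).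
    { rewrite (dmax_eq 0 s L hlen), m0_B. unfold Rdiv; ring. }
    rewrite Hdm. split.
    + intros [Hd <-]. right. split; auto.
    + intros [[y [Hy [-> ->]]]|[Hd ->]].
      * rewrite Hdy, Hry. split; [lra|reflexivity].
      * split; auto.
  - set (m := S m') in *.
    assert (Hm : (1 <= m)%nat) by (unfold m; lia).
    assert (HC := Cap_val m s L hlen hinj Hm hs). set (c := log2 (INR m) / INR s) in HC.
    assert (Hdmax : delta_max m s L = delta_y m s L 1).
    { rewrite (dmax_eq m s L hlen), (delta_y_eq m s L 1 hlen), Ay1, mult_INR. reflexivity. }
    assert (Hd0 : delta_y m s L 0 = 0).
    { rewrite (delta_y_eq m s L 0 hlen), By0. unfold Rdiv; ring. }
    assert (Hrange : forall y, 0 <= y <= 1 -> 0 <= delta_y m s L y <= 1).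
    { intros y Hy. rewrite (delta_y_eq m s L y hlen). assert (HA := Ay_pos m L y Hm ltac:(lra)).
      assert (HB := By_ge0 m L y ltac:(lra)). assert (HBle := By_le m s L y hlen ltac:(lra)).
      split. apply Rmult_le_pos; [lra| left; apply Rinv_0_lt_compat; nra].
      apply (Rmult_le_reg_r (INR s * Ay m L y)). nra. unfold Rdiv. rewrite Rmult_assoc, Rinv_l by nra. lra. }
    assert (Hphi1 : 2 * c - phi m s L 1 = 0).
    { rewrite (phi1 m s L hlen), Ay1. unfold c, log2. rewrite ln_mult by (apply (lt_INR 0); lia).
      pose proof ln2_pos. field; repeat split; lra. }
    assert (Hatmax : R_GV m s L (delta_y m s L 1) = Finite 0).
    { destruct (Nat.eq_dec m 1) as [E1|E1].
      - assert (delta_y m s L 1 = 0) by (rewrite (delta_y_eq m s L 1 hlen), E1, m1_B; unfold Rdiv; ring).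
        rewrite H. rewrite (R_GV_val _ _ _ _ _ _ HC (Ttilde0' m s L hlen hinj Hm hs)).
        f_equal. unfold phi. rewrite (Apoly_eq m s L 0 hlen), (Bpoly_eq m s L 0 hlen), E1, m1_A in *.
        unfold c. rewrite E1. simpl INR. unfold log2. rewrite ln_1. rewrite m1_B. unfold Rdiv. ring.
      - rewrite (R_GV_val _ _ _ _ _ _ HC (F4 m s L 1 hlen hinj ltac:(lia) hs ltac:(lra))). rewrite Hphi1. reflexivity. }
    assert (Hval : forall y, 0 <= y <= 1 -> R_GV m s L (delta_y m s L y) = Finite (rho_y m s L y)).
    { intros y Hy. rewrite (rho_phi m s L y hlen Hm hs ltac:(lra)). fold c.
      destruct (Req_dec y 0) as [->|Hy0].
      - rewrite Hd0. rewrite (R_GV_val _ _ _ _ _ _ HC (Ttilde0' m s L hlen hinj Hm hs)). reflexivity.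
      - destruct (Nat.eq_dec m 1) as [E1|E1].
        + assert (delta_y m s L y = 0) by (rewrite (delta_y_eq m s L y hlen), E1, m1_B; unfold Rdiv; ring).
          rewrite H. rewrite (R_GV_val _ _ _ _ _ _ HC (Ttilde0' m s L hlen hinj Hm hs)).
          f_equal. unfold phi. rewrite (Apoly_eq m s L 0 hlen), (Bpoly_eq m s L 0 hlen), (Apoly_eq m s L y hlen), (Bpoly_eq m s L y hlen), E1, !m1_A, !m1_B. unfold Rdiv. ring.
        + rewrite (R_GV_val _ _ _ _ _ _ HC (F4 m s L y hlen hinj ltac:(lia) hs ltac:(lra))). reflexivity. }
    assert (Habove : forall d, delta_y m s L 1 < d -> R_GV m s L d = Finite 0).
    { intros d Hd. rewrite (delta_y_eq m s L 1 hlen) in Hd.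
      rewrite (R_GV_val _ _ _ _ _ _ HC (F3 m s L d hlen hinj Hm hs Hd)). f_equal.
      rewrite <- (phi1 m s L hlen). lra. }
    split.
    + intros [Hd <-]. destruct (Rlt_le_dec (delta_y m s L 1) delta) as [Hlt|Hle].
      * right. rewrite Hdmax. split; [lra|]. apply Habove; auto.
      * destruct (Req_dec delta (delta_y m s L 1)) as [Heq|Hne].
        -- right. rewrite Hdmax, Heq. split; [lra|]. apply Hatmax.
        -- left. destruct (Req_dec delta 0) as [->|Hd0'].
           ++ exists 0. split; [lra|]. rewrite Hd0. split; auto. rewrite <- Hd0 at 1. apply Hval; lra.
           ++ assert (Hlt : delta < delta_y m s L 1) by lra.
              destruct (IVT_interv (fun y => delta_y m s L y - delta) 0 1) as [y [Hy Hyz]].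
              { intros a Ha. apply continuity_pt_minus. apply delta_cont; auto; lra. apply continuity_pt_const; intros u v; reflexivity. }
              lra. rewrite Hd0; lra. lra.
              exists y. split; auto. assert (Hdy : delta = delta_y m s L y) by lra. split; auto.
              rewrite Hdy. apply Hval; auto.
    + intros [[y [Hy [-> ->]]]|[Hd ->]].
      * split; [apply Hrange; auto|]. apply Hval; auto.
      * split; [|]. rewrite Hdmax in Hd. pose proof (Hrange 0 ltac:(lra)) as H0. pose proof (Hrange 1 ltac:(lra)). lra.
        rewrite Hdmax in Hd. destruct (Req_dec delta (delta_y m s L 1)) as [->|Hne]; [apply Hatmax|apply Habove; lra].
Qed.
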